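(* Let $k$ be a positive integer and $l\in\{k+2,k+3,k+4\}$. Let $N^l_k$ be the lattice ${\mathbb{Z}}^{l+1}$ with basis $\ell_0,\dots,\ell_l$ and scalar product $(\ell_0,\ell_0)=k$, $(\ell_i,\ell_i)=-1$ for $1\le i\le l$, $(\ell_i,\ell_j)=0$ for $i\ne j$, let $\omega=-\frac{k+2}{k}\ell_0+\ell_1+\dots+\ell_l$, and let $R^l_k$ be the set of $\ell\in N^l_k$ with $(\ell,\ell)=-2$ and $(\ell,\omega)=0$. Then the vectors $\pm(\ell_i-\ell_j)$ for $1\le i<j\le l$, together with $\pm\big(\ell_0-\sum_{i\in I}\ell_i\big)$ for subsets $I\subset\{1,\dots,l\}$ with $|I|=k+2$, lie in $R^l_k$ and form a root system of type $A_{k+1}\times A_1$ if $l=k+2$, $A_{k+3}$ if $l=k+3$, and $D_{k+4}$ if $l=k+4$.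
   Context: Root systems are taken with respect to the negative of the scalar product, which is positive definite on the orthogonal complement of $\omega$. *)

(* Defs.v *)
From HB Require Import structures.
From mathcomp Require Import all_boot all_order all_algebra.
Set Implicit Arguments. Unset Strict Implicit. Unset Printing Implicit Defensive.
Import Order.TTheory GRing.Theory Num.Theory.
Local Open Scope ring_scope.

Definition ell (l : nat) (i : 'I_l.+1) : 'rV[int]_l.+1 := delta_mx 0 i.

Definition gram (R : pzRingType) (k l : nat) : 'M[R]_l.+1 :=
  \matrix_(i, j) (if i == j then (if i == ord0 then k%:R else -1) else 0).

Definition formR (R : comPzRingType) (k l : nat) (x y : 'rV[R]_l.+1) : R :=
  (x *m gram R k l *m y^T) 0 0.

Definition formN (k l : nat) (x y : 'rV[int]_l.+1) : int := formR k x y.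

Definition omega (k l : nat) : 'rV[rat]_l.+1 :=
  \row_i (if i == ord0 then - ((k + 2)%:R / k%:R) else 1).

Definition inR (k l : nat) (v : 'rV[int]_l.+1) : Prop :=
  formN k v v = -2 /\ formR k (map_mx intr v) (omega k l) = 0.

Definition rootsS (k l : nat) : pred 'rV[int]_l.+1 := fun v =>
  [exists i : 'I_l.+1, exists j : 'I_l.+1,
     [&& i != ord0, j != ord0, i != j & v == ell i - ell j]]
  || [exists I : {set 'I_l.+1},
       [&& ord0 \notin I, #|I| == (k + 2)%N &
           (v == ell ord0 - \sum_(i in I) ell i)
           || (v == - (ell ord0 - \sum_(i in I) ell i))]].

(* A (reduced, crystallographic) root system given as a subset S of a
   Z-module V equipped with a symmetric bilinear form B, taken in the
   Z-span of S (the form must be positive definite there). *)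
Definition is_root_system (V : zmodType) (B : V -> V -> int) (S : pred V) : Prop :=
  (exists s : seq V, S =1 (fun v => v \in s) /\
     (forall c : 'I_(size s) -> int,
        let v := \sum_(i < size s) s`_i *~ c i in v != 0 -> 0 < B v v))
  /\ (forall a, S a -> a != 0)
  /\ (forall a b, S a -> S b ->
        (B a a %| 2 * B a b)%Z /\ S (b - a *~ ((2 * B a b) %/ B a a)%Z))
  /\ (forall a b (m n : int), S a -> S b -> m != 0 -> b *~ m = a *~ n ->
        b = a \/ b = - a).

Definition rs_iso (V W : zmodType) (B : V -> V -> int) (C : W -> W -> int)
  (S : pred V) (T : pred W) : Prop :=
  exists f : V -> W,
    (forall v, S v -> T (f v))
    /\ (forall u v, S u -> S v -> f u = f v -> u = v)
    /\ (forall w, T w -> exists2 v, S v & f v = w)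
    /\ (forall u v, S u -> S v -> C (f u) (f v) = B u v).

Definition dot (n : nat) (x y : 'rV[int]_n) : int := (x *m y^T) 0 0.

Definition stdA (n : nat) : pred 'rV[int]_n.+1 := fun v =>
  [exists i : 'I_n.+1, exists j : 'I_n.+1,
     (i != j) && (v == delta_mx 0 i - delta_mx 0 j)].

Definition stdD (n : nat) : pred 'rV[int]_n := fun v =>
  [exists i : 'I_n, exists j : 'I_n, exists s : bool, exists t : bool,
     (i < j)%N && (v == (-1) ^+ s *: delta_mx 0 i + (-1) ^+ t *: delta_mx 0 j)].

Definition stdAxA (m n : nat) : pred 'rV[int]_(m.+1 + n.+1) := fun v =>
  [exists i : 'I_m.+1, exists j : 'I_m.+1,
     (i != j) && (v == delta_mx 0 (lshift n.+1 i) - delta_mx 0 (lshift n.+1 j))]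
  || [exists i : 'I_n.+1, exists j : 'I_n.+1,
     (i != j) && (v == delta_mx 0 (rshift m.+1 i) - delta_mx 0 (rshift m.+1 j))].

Definition negform (k l : nat) (x y : 'rV[int]_l.+1) : int := - formN k x y.

(* Main.v *)
Require Import Defs.
From HB Require Import structures.
From mathcomp Require Import all_boot all_order all_algebra.
From mathcomp Require Import zify ring lra.
Import Order.TTheory GRing.Theory Num.Theory.
Local Open Scope ring_scope.

Lemma mzE n (a : 'rV[int]_n) c i : (a *~ c) 0 i = a 0 i * c.
Proof.
have P m : (a *~ Posz m) 0 i = a 0 i * Posz m by rewrite /= mulmxnE -mulrzz.
case: c => m; first exact: P.
by rewrite NegzE mulrNz mxE P mulrN.
Qed.

Lemma formRE (R : comPzRingType) k l (x y : 'rV[R]_l.+1) :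
  formR k x y = k%:R * x 0 ord0 * y 0 ord0
     - \sum_(m < l) x 0 (lift ord0 m) * y 0 (lift ord0 m).
Proof.
rewrite /formR !mxE.
have H j : (x *m gram R k l) 0 j = x 0 j * (if j == ord0 then k%:R else -1).
  rewrite !mxE (bigD1 j) //= big1 ?addr0; first by rewrite mxE eqxx.
  by move=> i /negbTE ne; rewrite mxE ne mulr0.
rewrite big_ord_recl H eqxx mxE.
rewrite -sumrN; congr (_ + _); first by ring.
apply: eq_bigr => m _; rewrite H mxE.
have -> : (lift ord0 m == ord0) = false by rewrite eq_sym (negbTE (neq_lift _ _)).
by rewrite mulrN1 mulNr.
Qed.

Definition hd {l} (v : 'rV[int]_l.+1) := v 0 ord0.
Definition tl {l} (v : 'rV[int]_l.+1) (m : 'I_l) := v 0 (lift ord0 m).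
Definition ts {l} (u v : 'rV[int]_l.+1) := \sum_(m < l) tl u m * tl v m.
Definition tsum {l} (v : 'rV[int]_l.+1) := \sum_(m < l) tl v m.
Definition Lf k {l} (v : 'rV[int]_l.+1) : int := (k+2)%:R * hd v + tsum v.

Lemma negformE k l (u v : 'rV[int]_l.+1) :
  negform k u v = ts u v - k%:R * hd u * hd v.
Proof. rewrite /negform; rewrite /Defs.formN formRE.
rewrite opprB. by []. Qed.

Lemma hdD l (u v : 'rV[int]_l.+1) : hd (u + v) = hd u + hd v.
Proof. by rewrite /hd mxE. Qed.
Lemma hdN l (u : 'rV[int]_l.+1) : hd (- u) = - hd u.
Proof. by rewrite /hd mxE. Qed.
Lemma hdZ l (u : 'rV[int]_l.+1) c : hd (u *~ c) = hd u * c.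
Proof. by rewrite /hd mzE. Qed.
Lemma tlD l (u v : 'rV[int]_l.+1) m : tl (u + v) m = tl u m + tl v m.
Proof. by rewrite /tl mxE. Qed.
Lemma tlN l (u : 'rV[int]_l.+1) m : tl (- u) m = - tl u m.
Proof. by rewrite /tl mxE. Qed.
Lemma tlZ l (u : 'rV[int]_l.+1) c m : tl (u *~ c) m = tl u m * c.
Proof. by rewrite /tl mzE. Qed.

Lemma tsC l (u v : 'rV[int]_l.+1) : ts u v = ts v u.
Proof. by apply: eq_bigr => m _; rewrite mulrC. Qed.
Lemma tsDl l (u v w : 'rV[int]_l.+1) : ts (u + v) w = ts u w + ts v w.
Proof. by rewrite /ts -big_split; apply: eq_bigr => m _; rewrite tlD mulrDl. Qed.
Lemma tsNl l (u w : 'rV[int]_l.+1) : ts (- u) w = - ts u w.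
Proof. by rewrite /ts -sumrN; apply: eq_bigr => m _; rewrite tlN mulNr. Qed.
Lemma tsZl l (u w : 'rV[int]_l.+1) c : ts (u *~ c) w = ts u w * c.
Proof. by rewrite /ts mulr_suml; apply: eq_bigr => m _; rewrite tlZ mulrAC. Qed.
Lemma tsumD l (u v : 'rV[int]_l.+1) : tsum (u + v) = tsum u + tsum v.
Proof. by rewrite /tsum -big_split; apply: eq_bigr => m _; rewrite tlD. Qed.
Lemma tsumN l (u : 'rV[int]_l.+1) : tsum (- u) = - tsum u.
Proof. by rewrite /tsum -sumrN; apply: eq_bigr => m _; rewrite tlN. Qed.
Lemma tsumZ l (u : 'rV[int]_l.+1) c : tsum (u *~ c) = tsum u * c.
Proof. by rewrite /tsum mulr_suml; apply: eq_bigr => m _; rewrite tlZ. Qed.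

Lemma LfD k l (u v : 'rV[int]_l.+1) : Lf k (u + v) = Lf k u + Lf k v.
Proof. rewrite /Lf hdD tsumD; ring. Qed.
Lemma LfN k l (u : 'rV[int]_l.+1) : Lf k (- u) = - Lf k u.
Proof. rewrite /Lf hdN tsumN; ring. Qed.
Lemma LfZ k l (u : 'rV[int]_l.+1) c : Lf k (u *~ c) = Lf k u * c.
Proof. rewrite /Lf hdZ tsumZ; ring. Qed.
Lemma Lf0 k l : Lf k (0 : 'rV[int]_l.+1) = 0.
Proof.
rewrite /Lf /hd /tsum mxE big1 ?addr0 ?mulr0 // => m _; by rewrite /tl mxE.
Qed.

Lemma nfC k l (u v : 'rV[int]_l.+1) : negform k u v = negform k v u.
Proof. rewrite !negformE tsC; ring. Qed.
Lemma nfDl k l (u v w : 'rV[int]_l.+1) :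
  negform k (u + v) w = negform k u w + negform k v w.
Proof. rewrite !negformE tsDl hdD; ring. Qed.
Lemma nfNl k l (u w : 'rV[int]_l.+1) : negform k (- u) w = - negform k u w.
Proof. rewrite !negformE tsNl hdN; ring. Qed.
Lemma nfZl k l (u w : 'rV[int]_l.+1) c :
  negform k (u *~ c) w = negform k u w * c.
Proof. rewrite !negformE tsZl hdZ; ring. Qed.
Lemma nfDr k l (u v w : 'rV[int]_l.+1) :
  negform k w (u + v) = negform k w u + negform k w v.
Proof. by rewrite !(nfC k _ w) nfDl. Qed.
Lemma nfNr k l (u w : 'rV[int]_l.+1) : negform k w (- u) = - negform k w u.
Proof. by rewrite !(nfC k _ w) nfNl. Qed.
Lemma nfZr k l (u w : 'rV[int]_l.+1) c :
  negform k w (u *~ c) = negform k w u * c.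
Proof. by rewrite !(nfC k _ w) nfZl. Qed.

Lemma sum1 n (F : 'I_n -> int) a :
  (forall m, m != a -> F m = 0) -> \sum_m F m = F a.
Proof. by move=> H; rewrite (bigD1 a) //= big1 ?addr0. Qed.

Lemma sum2 n (F : 'I_n -> int) a b : a != b ->
  (forall m, m != a -> m != b -> F m = 0) -> \sum_m F m = F a + F b.
Proof.
move=> ab H; rewrite (bigD1 a) //= (bigD1 b) 1?eq_sym //= big1 ?addr0 //.
by move=> m /andP[ma mb]; apply: H.
Qed.

Lemma deltaE n (i c : 'I_n) : (delta_mx 0 i : 'rV[int]_n) 0 c = (c == i)%:R.
Proof. by rewrite mxE eqxx. Qed.

Lemma sumdE n (I : {set 'I_n}) c :
  (\sum_(i in I) delta_mx 0 i : 'rV[int]_n) 0 c = (c \in I)%:R.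
Proof.
rewrite summxE; under eq_bigr do rewrite deltaE.
rewrite big_mkcond (bigD1 c) //= big1 ?addr0; first by rewrite eqxx; case: (c \in I).
by move=> i ne; rewrite eq_sym (negbTE ne); case: (i \in I).
Qed.

Lemma cardE l (I : {set 'I_l.+1}) : ord0 \notin I ->
  (#|I|%:R : int) = \sum_(m < l) (lift ord0 m \in I)%:R.
Proof.
move=> nI.
have -> : (#|I|%:R : int) = \sum_(c in I) 1 by rewrite sumr_const.
rewrite big_mkcond big_ord_recl (negbTE nI) /= add0r.
by apply: eq_bigr => m _; case: (_ \in I).
Qed.

Definition Sp k l (v : 'rV[int]_l.+1) :=
  [/\ negform k v v = 2, Lf k v = 0 & -1 <= hd v <= 1].

Lemma Sp_opp k l (v : 'rV[int]_l.+1) : Sp k l v -> Sp k l (- v).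
Proof.
case=> H1 H2 H3; split; first by rewrite nfNl nfNr opprK.
  by rewrite LfN H2 oppr0.
rewrite hdN; lia.
Qed.

Lemma tl_ell l (a m : 'I_l) : tl (ell (lift ord0 a)) m = (m == a)%:R.
Proof. by rewrite /tl /ell deltaE (inj_eq (@lift_inj _ _)). Qed.
Lemma hd_ell l (a : 'I_l) : hd (ell (lift ord0 a)) = 0.
Proof. by rewrite /hd /ell deltaE (negbTE (neq_lift _ _)). Qed.

Lemma Sp_diff k l (a b : 'I_l) : a != b ->
  Sp k l (ell (lift ord0 a) - ell (lift ord0 b)).
Proof.
move=> ab; split.
- rewrite negformE hdD hdN !hd_ell subrr mulr0 subr0 /ts.
  rewrite (sum2 _ _ _ _ ab).
    by rewrite !tlD !tlN !tl_ell eqxx (negbTE ab) eq_sym (negbTE ab) eqxx.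
  by move=> m ma mb; rewrite !tlD !tlN !tl_ell (negbTE ma) (negbTE mb) subrr mulr0.
- rewrite /Lf hdD hdN !hd_ell subrr mulr0 add0r /tsum.
  rewrite (sum2 _ _ _ _ ab).
    by rewrite !tlD !tlN !tl_ell eqxx (negbTE ab) eq_sym (negbTE ab) eqxx.
  by move=> m ma mb; rewrite !tlD !tlN !tl_ell (negbTE ma) (negbTE mb) subrr.
- by rewrite hdD hdN !hd_ell subrr.
Qed.

Lemma Sp_X k l (I : {set 'I_l.+1}) : ord0 \notin I -> #|I| = (k + 2)%N ->
  Sp k l (ell ord0 - \sum_(i in I) ell i).
Proof.
move=> nI cI.
have hX : hd (ell ord0 - \sum_(i in I) ell i) = 1.
  by rewrite /hd /ell !mxE sumdE (negbTE nI) !eqxx /= subr0.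
have tX m : tl (ell ord0 - \sum_(i in I) ell i) m = - (lift ord0 m \in I)%:R.
  have nl : (lift ord0 m == ord0) = false by rewrite eq_sym; apply/negbTE/neq_lift.
  by rewrite /tl /ell !mxE sumdE nl eqxx /= sub0r.
split.
- rewrite negformE hX /ts.
  under eq_bigr do rewrite tX mulrNN -natrM mulnb andbb.
  rewrite -cardE // cI; rewrite natrD; ring.
- rewrite /Lf hX /tsum.
  under eq_bigr do rewrite tX.
  rewrite sumrN -cardE // cI; ring.
- by rewrite hX.
Qed.

Lemma roots_Sp k l (v : 'rV[int]_l.+1) : @rootsS k l v -> Sp k l v.
Proof.
case/orP => [/existsP[i /existsP[j /and4P[i0 j0 ij /eqP->]]] |
             /existsP[I /and3P[nI /eqP cI /orP[/eqP->|/eqP->]]]].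
- rewrite eq_sym in i0; rewrite eq_sym in j0.
  have [i2 Ei _] := unlift_some i0; have [j2 Ej _] := unlift_some j0.
  subst i j.
  apply: Sp_diff; apply: contra ij => /eqP-> //. 
- exact: Sp_X.
- exact/Sp_opp/Sp_X.
Qed.

Lemma dotE n (u v : 'rV[int]_n) : dot u v = \sum_c u 0 c * v 0 c.
Proof. by rewrite /dot mxE; apply: eq_bigr => c _; rewrite mxE. Qed.

Lemma sq_le_sum n (F : 'I_n -> int) c : (forall i, 0 <= F i) -> F c <= \sum_i F i.
Proof.
move=> H; rewrite (bigD1 c) //= lerDl; exact: sumr_ge0.
Qed.

Lemma LemB n (w : 'rV[int]_n) : \sum_c w 0 c * w 0 c = 2 ->
  exists (i j : 'I_n) (s t : bool), (i < j)%N /\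
    w = (-1) ^+ s *: delta_mx 0 i + (-1) ^+ t *: delta_mx 0 j.
Proof.
move=> H.
have sq0 c : 0 <= w 0 c * w 0 c by nia.
have b c : -1 <= w 0 c <= 1.
  have := sq_le_sum _ (fun c => w 0 c * w 0 c) c sq0; rewrite H => h; nia.
pose P := [set c | w 0 c != 0].
have cP : #|P| = 2%N.
  have : (#|P|%:R : int) = 2.
    rewrite -H -sumr_const big_mkcond; apply: eq_bigr => c _.
    rewrite inE; have := b c; case: (w 0 c =P 0) => [->|/eqP ne] //= h; move/eqP: ne => ne; nia.
  move=> h; lia.
have w0 c : c \notin P -> w 0 c = 0 by rewrite inE negbK => /eqP.
have ws c : c \in P -> w 0 c = (-1) ^+ (w 0 c == -1).
  rewrite inE => ne; have := b c; case: (w 0 c =P -1) => [->|] //= ne2; lia.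
have /cards2P [x [y [xy Pxy]]] : #|P| == 2%N by rewrite cP.
have xP : x \in P by rewrite Pxy !inE eqxx.
have yP : y \in P by rewrite Pxy !inE eqxx orbT.
have key (a d : 'I_n) : a \in P -> d \in P -> a != d ->
    (forall c, c \notin P \/ c = a \/ c = d) ->
    w = (-1) ^+ (w 0 a == -1) *: delta_mx 0 a + (-1) ^+ (w 0 d == -1) *: delta_mx 0 d.
  move=> aP bP ab all; apply/matrixP => i c; rewrite ord1 !mxE !eqxx /=.
  case: (all c) => [cnP|[->|->]].
  - have ca : (c == a) = false by apply/eqP => e; rewrite e aP in cnP.
    have cd : (c == d) = false by apply/eqP => e; rewrite e bP in cnP.
    by rewrite (w0 _ cnP) ca cd !mulr0 addr0.
  - rewrite eqxx (negbTE ab) mulr0 addr0 mulr1; exact: ws.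
  - rewrite eqxx (eq_sym d a) (negbTE ab) mulr0 add0r mulr1; exact: ws.
have allc c : c \notin P \/ c = x \/ c = y.
  case: (boolP (c \in P)) => [|h]; last by left.
  by rewrite Pxy !inE => /orP[/eqP|/eqP]; auto.
case: (ltngtP x y) => [lt|lt|/val_inj e]; last by rewrite e eqxx in xy.
- by exists x, y, (w 0 x == -1), (w 0 y == -1); split => //; apply: key.
- exists y, x, (w 0 y == -1), (w 0 x == -1); split => //; apply: key => //.
  by rewrite eq_sym.
  by move=> c; case: (allc c) => [|[]]; auto.
Qed.

Lemma LemA n (w : 'rV[int]_n) : \sum_c w 0 c * w 0 c = 2 -> \sum_c w 0 c = 0 ->
  exists (i j : 'I_n), i != j /\ w = delta_mx 0 i - delta_mx 0 j.
Proof.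
move=> /LemB [i [j [s [t [ij ->]]]]].
have nij : i != j by rewrite neq_ltn ij.
rewrite (sum2 _ _ _ _ nij); last first.
  by move=> m mi mj; rewrite !mxE (negbTE mi) (negbTE mj) !andbF !mulr0 addr0.
rewrite !mxE !eqxx (eq_sym j i) (negbTE nij) /= !mulr1 !mulr0 addr0 add0r.
case: s; case: t => /= h.
- by move: h; rewrite expr1 => /eqP; rewrite -oppr_eq0 opprD opprK.
- exists j, i; split; first by rewrite eq_sym.
  by rewrite expr1 expr0 !scaleN1r scale1r addrC.
- by exists i, j; split => //; rewrite expr1 expr0 !scaleN1r scale1r.
- by move: h; rewrite expr0.
Qed.

Lemma roots_opp k l (v : 'rV[int]_l.+1) : @rootsS k l v -> @rootsS k l (- v).
Proof.
case/orP => [/existsP[i /existsP[j /and4P[i0 j0 ij /eqP->]]] |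
             /existsP[I /and3P[nI cI /orP[/eqP->|/eqP->]]]].
- apply/orP; left; apply/existsP; exists j; apply/existsP; exists i.
  by rewrite j0 i0 (eq_sym j i) ij opprB eqxx.
- by apply/orP; right; apply/existsP; exists I; rewrite nI cI eqxx orbT.
- by apply/orP; right; apply/existsP; exists I; rewrite nI cI opprK eqxx.
Qed.

Lemma full_sum l (F : 'I_l.+1 -> int) :
  \sum_c F c = F ord0 + \sum_(m < l) F (lift ord0 m).
Proof. exact: big_ord_recl. Qed.

Lemma Sp_roots1 k l (v : 'rV[int]_l.+1) : Sp k l v -> hd v = 1 -> @rootsS k l v.
Proof.
case=> Hn HL _ h1.
have Hs : \sum_(m < l) (tl v m * tl v m + tl v m) = 0.
  rewrite big_split /=; move: Hn HL; rewrite negformE /Lf h1 -/(ts v v) -/(tsum v).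
  move=> Hn HL; lia.
have t01 m : tl v m = 0 \/ tl v m = -1.
  have h : tl v m * tl v m + tl v m = 0.
    by apply: (psumr_eq0P _ Hs) => // i _; nia.
  nia.
pose I := [set c | v 0 c == -1].
have nI : ord0 \notin I by rewrite inE; move: h1; rewrite /hd => ->.
have cI : #|I| = (k+2)%N.
  have : (#|I|%:R : int) = (k+2)%:R.
    rewrite cardE //; transitivity (- tsum v); last first.
      by move: HL; rewrite /Lf h1 mulr1; lia.
    rewrite /tsum -sumrN; apply: eq_bigr => m _; rewrite inE.
    by case: (t01 m); rewrite /tl => ->.
  by move/eqP; rewrite eqr_nat => /eqP.
apply/orP; right; apply/existsP; exists I; rewrite nI cI eqxx /=; apply/orP; left.
apply/eqP/matrixP => i c; rewrite ord1 /ell !mxE sumdE.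
case: (unliftP ord0 c) => [m ->|->].
- rewrite eqxx /= inE; by case: (t01 m); rewrite /tl => ->.
- by rewrite !eqxx (negbTE nI) /= subr0; move: h1; rewrite /hd.
Qed.

Lemma Sp_roots k l (v : 'rV[int]_l.+1) : Sp k l v -> @rootsS k l v.
Proof.
move=> S; case: (S) => Hn HL hb.
have : hd v = -1 \/ hd v = 0 \/ hd v = 1 by lia.
case => [hm|[h0|h1]]; last exact: Sp_roots1.
- rewrite -(opprK v); apply: roots_opp; apply: Sp_roots1; first exact: Sp_opp.
  by rewrite hdN hm opprK.
- have [i [j [ij Ev]]] : exists (i j : 'I_l.+1), i != j /\ v = delta_mx 0 i - delta_mx 0 j.
    apply: LemA.
      rewrite full_sum; move: Hn; rewrite negformE; move: h0; rewrite /hd => ->.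
      by rewrite !mulr0 subr0 add0r.
    rewrite full_sum; move: HL; rewrite /Lf; move: h0; rewrite /hd => ->.
    by rewrite mulr0 !add0r.
  have hv : hd v = (ord0 == i)%:R - (ord0 == j)%:R by rewrite Ev /hd !mxE.
  apply/orP; left; apply/existsP; exists i; apply/existsP; exists j.
  rewrite ij Ev /ell eqxx andbT andbT.
  apply/andP; split; apply/negP => /eqP e; subst; move: hv; rewrite eqxx h0.
    by rewrite (negbTE ij).
  by rewrite eq_sym (negbTE ij).
Qed.

Lemma CS n (x : 'I_n -> int) :
  (\sum_i x i) * (\sum_i x i) <= n%:R * \sum_i x i * x i.
Proof.
case: n x => [|n] x; first by rewrite !big_ord0 mulr0.
set S := \sum_i x i; set Q := \sum_i x i * x i.
have E : \sum_i ((n.+1%:R * x i - S) * (n.+1%:R * x i - S)) =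
         n.+1%:R * (n.+1%:R * Q - S * S).
  transitivity (\sum_i (n.+1%:R * n.+1%:R * (x i * x i) - (2 * n.+1%:R * S) * x i + S * S)).
    by apply: eq_bigr => i _; ring.
  rewrite big_split sumrB /= -!mulr_sumr sumr_const card_ord -/S -/Q.
  rewrite -mulr_natr; ring.
have : 0 <= n.+1%:R * (n.+1%:R * Q - S * S) :> int.
  by rewrite -E; apply: sumr_ge0 => i _; rewrite -expr2 sqr_ge0.
move=> h; have : 0 < n.+1%:R :> int by [].
nia.
Qed.

Lemma posL k l (v : 'rV[int]_l.+1) : (l <= k + 4)%N -> Lf k v = 0 -> v != 0 ->
  0 < negform k v v.
Proof.
move=> lk HL nz; rewrite negformE.
have cs := CS _ (tl v); rewrite -/(tsum v) -/(ts v v) in cs.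
move: HL; rewrite /Lf => HL.
case: (hd v =P 0) => [h0|/eqP h0].
  rewrite h0 mulr0 subr0.
  case: (boolP [exists m, tl v m != 0]) => [/existsP[m /eqP hm]|].
    have sq0 i : 0 <= tl v i * tl v i by rewrite -expr2 sqr_ge0.
    have := sq_le_sum _ _ m sq0; rewrite -/(ts v v) => h; nia.
  rewrite negb_exists => /forallP H; case/eqP: nz.
  apply/matrixP => i c; rewrite ord1 mxE.
  case: (unliftP ord0 c) => [m ->|->]; last exact: h0.
  by move: (H m); rewrite negbK /tl => /eqP.
have lk' : (l%:R : int) <= k%:R + 4 by rewrite -natrD ler_nat; lia.
have k0 : (0 : int) <= k%:R by [].
have l0 : (0 : int) <= l%:R by [].
rewrite natrD in HL.
move: cs HL lk' k0 l0 h0.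
rewrite -/(tsum v) -/(ts v v).
move: (hd v) (tsum v) (ts v v) (k%:R : int) (l%:R : int) => h T Q K L cs HL lk' k0 l0 h0.
have hT : T = - ((K + 2) * h).
  by move: HL => /eqP; rewrite addrC addr_eq0 => /eqP.
have h2 : 1 <= h * h by nia.
have s1 : (K + 2) * (K + 2) * (h * h) <= L * Q.
  have e : (- ((K + 2) * h)) * (- ((K + 2) * h)) = (K + 2) * (K + 2) * (h * h) by ring.
  by move: cs; rewrite hT e.
have s2 : L * K * (h * h) <= (K * K + 4 * K) * (h * h).
  apply: ler_wpM2r; first nia. nia.
have s3 : 4 <= L * (Q - K * h * h) by nia.
nia.
Qed.

Lemma tl01 k l (v : 'rV[int]_l.+1) : Sp k l v -> hd v = 1 ->
  forall m, tl v m = 0 \/ tl v m = -1.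
Proof.
case=> Hn HL _ h1.
have Hs : \sum_(m < l) (tl v m * tl v m + tl v m) = 0.
  rewrite big_split /=; move: Hn HL; rewrite negformE /Lf h1 -/(ts v v) -/(tsum v).
  move=> Hn HL; lia.
move=> m; have h : tl v m * tl v m + tl v m = 0.
  by apply: (psumr_eq0P _ Hs) => // i _; nia.
nia.
Qed.

Lemma nf_ell k l (a : 'rV[int]_l.+1) i : negform k a (ell (lift ord0 i)) = tl a i.
Proof.
rewrite negformE hd_ell mulr0 subr0 /ts (sum1 _ _ i).
  by rewrite tl_ell eqxx mulr1.
by move=> m mi; rewrite tl_ell (negbTE mi) mulr0.
Qed.

Lemma bound1 k l (a b : 'rV[int]_l.+1) : (l <= k + 4)%N ->
  Sp k l a -> Sp k l b -> hd a = 1 -> hd b = 0 \/ hd b = 1 ->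
  -1 <= hd b - negform k a b <= 1.
Proof.
move=> lk Sa Sb ha [hb|hb].
- have := Sp_roots _ _ _ Sb; case/orP => [/existsP[i /existsP[j /and4P[i0 j0 ij /eqP Eb]]] |
             /existsP[I /and3P[nI cI /orP[/eqP Eb|/eqP Eb]]]].
  + rewrite eq_sym in i0; rewrite eq_sym in j0.
    have [i2 Ei _] := unlift_some i0; have [j2 Ej _] := unlift_some j0.
    subst i j; rewrite Eb nfDr nfNr !nf_ell hdD hdN !hd_ell subrr sub0r.
    have := tl01 _ _ _ Sa ha i2; have := tl01 _ _ _ Sa ha j2; lia.
  + move: hb; rewrite Eb /hd /ell !mxE sumdE (negbTE nI) !eqxx /=; lia.
  + move: hb; rewrite Eb /hd /ell !mxE sumdE (negbTE nI) !eqxx /=; lia.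
- have ta := tl01 _ _ _ Sa ha; have tb := tl01 _ _ _ Sb hb.
  case: Sa => _ HLa _; case: Sb => _ HLb _.
  move: HLa HLb; rewrite /Lf ha hb mulr1 => HLa HLb.
  have lo : \sum_(m < l) (-1 - tl a m - tl b m) <= ts a b.
    by apply: ler_sum => m _; case: (ta m) => ->; case: (tb m) => ->.
  have up : ts a b <= \sum_(m < l) (- tl a m).
    by apply: ler_sum => m _; case: (ta m) => ->; case: (tb m) => ->.
  rewrite !sumrB sumrN sumr_const card_ord -/(tsum a) -/(tsum b) in lo up.
  rewrite sumrN -/(tsum a) in up.
  rewrite negformE ha hb.
  have lk' : (l%:R : int) <= k%:R + 4 by rewrite -natrD ler_nat; lia.
  move: lo; rewrite -mulNrn.  rewrite natrD in HLa HLb; lia.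
Qed.

Lemma bound2 k l (a b : 'rV[int]_l.+1) : (l <= k + 4)%N ->
  Sp k l a -> Sp k l b -> hd a = 1 -> -1 <= hd b - negform k a b <= 1.
Proof.
move=> lk Sa Sb ha; have [_ _ hb] := Sb.
have : hd b = -1 \/ hd b = 0 \/ hd b = 1 by lia.
case=> [hm|hb']; last exact: bound1.
have := bound1 _ _ _ _ lk Sa (Sp_opp _ _ _ Sb) ha.
rewrite hdN nfNr hm opprK; lia.
Qed.

Lemma refl_S k l (a b : 'rV[int]_l.+1) : (l <= k + 4)%N ->
  Sp k l a -> Sp k l b -> Sp k l (b - a *~ negform k a b).
Proof.
move=> lk Sa Sb; have [Na La ha] := Sa; have [Nb Lb hb] := Sb.
split.
- rewrite !(nfDl, nfDr, nfNl, nfNr, nfZl, nfZr) Na Nb (nfC k _ b a); ring.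
- by rewrite LfD LfN LfZ La Lb mul0r subrr.
rewrite hdD hdN hdZ.
have : hd a = -1 \/ hd a = 0 \/ hd a = 1 by lia.
case=> [hm|[h0|h1]].
- have := bound2 _ _ _ _ lk (Sp_opp _ _ _ Sa) Sb; rewrite hdN hm opprK nfNl => /(_ erefl).
  lia.
- by rewrite h0 mul0r subr0.
- by have := bound2 _ _ _ _ lk Sa Sb h1; rewrite h1 mul1r.
Qed.

Lemma nf00 k l : negform k (0 : 'rV[int]_l.+1) 0 = 0.
Proof.
rewrite negformE /hd mxE mulr0 subr0 /ts big1 // => m _; by rewrite /tl mxE mul0r.
Qed.

Lemma mz_inj n (x y : 'rV[int]_n) (m : int) : m != 0 -> x *~ m = y *~ m -> x = y.
Proof.
move=> m0 E; apply/matrixP => i j; rewrite ord1.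
by have := congr1 (fun M : 'rV[int]_n => M 0 j) E; rewrite /= !mzE => /(mulIf m0).
Qed.

Lemma Lf_sum k l n (F : 'I_n -> 'rV[int]_l.+1) :
  Lf k (\sum_i F i) = \sum_i Lf k (F i).
Proof. exact: (big_morph _ (LfD k l) (Lf0 k l)). Qed.

Notation Dt l := (('I_l.+1 * 'I_l.+1) + (bool * {set 'I_l.+1}))%type.
Definition rD l (d : Dt l) : 'rV[int]_l.+1 :=
  match d with
  | inl (i, j) => ell i - ell j
  | inr (b, J) => if b then - (ell ord0 - \sum_(i in J) ell i)
                  else ell ord0 - \sum_(i in J) ell i
  end.

Lemma root_system k l : (l <= k + 4)%N ->
  is_root_system (@negform k l) (@rootsS k l).
Proof.
move=> lk.
have SS v : @rootsS k l v -> Sp k l v by exact: roots_Sp.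
split; [|split; [|split]].
- exists [seq v <- [seq rD l d | d <- enum {: Dt l}] | @rootsS k l v].
  split.
    move=> v; rewrite mem_filter; case R: (@rootsS k l v) => //=; symmetry.
    move: R; case/orP => [/existsP[i /existsP[j /and4P[i0 j0 ij /eqP->]]] |
             /existsP[I /and3P[nI cI /orP[/eqP->|/eqP->]]]].
    + by apply/mapP; exists (inl (i, j)); rewrite ?mem_enum.
    + by apply/mapP; exists (inr (false, I)); rewrite ?mem_enum.
    + by apply/mapP; exists (inr (true, I)); rewrite ?mem_enum.
  move=> c /= nz; apply: posL => //.
  rewrite Lf_sum big1 // => i _; rewrite LfZ.
  have := mem_nth 0 (ltn_ord i); rewrite mem_filter => /andP[/SS [_ -> _] _].
  by rewrite mul0r.
- move=> a /SS [Na _ _]; apply/eqP => a0; move: Na; rewrite a0 nf00.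
  by [].
- move=> a b /SS Sa /SS Sb; have [Na _ _] := Sa; rewrite Na; split.
    by apply: dvdz_mulr; apply: dvdzz.
  rewrite mulKz //; apply: Sp_roots; exact: refl_S.
- move=> a b m n /SS Sa /SS Sb m0 E.
  have [Na _ _] := Sa; have [Nb _ _] := Sb.
  have : m * m = n * n.
    have := congr1 (fun x => negform k x x) E; rewrite /= !(nfZl, nfZr) Na Nb.
    lia.
  move=> mn; have : n = m \/ n = - m by nia.
  case=> e; rewrite e in E; first by left; apply: (mz_inj _ _ _ _ m0).
  by right; apply: (mz_inj _ _ _ _ m0); rewrite E mulrNz mulNrz.
Qed.

Lemma roots_inR k l (v : 'rV[int]_l.+1) : (0 < k)%N -> @rootsS k l v -> @inR k l v.
Proof.
move=> k0 /roots_Sp [Na HL _]; split.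
  by move: Na; rewrite /negform => /eqP; rewrite eqr_oppLR => /eqP.
rewrite formRE !mxE eqxx.
have nl m : (lift ord0 m == ord0 :> 'I_l.+1) = false by rewrite eq_sym; apply/negbTE/neq_lift.
under eq_bigr => m _ do rewrite !mxE nl mulr1.
have e : \sum_m ((v 0 (lift ord0 m))%:~R : rat) = (tsum v)%:~R.
  by rewrite /tsum rmorph_sum.
rewrite e.
have := congr1 (fun z : int => (z%:~R : rat)) HL; rewrite /Lf /= rmorphD rmorphM /=.
rewrite -/(hd v) => h.
have kn : (k%:R : rat) != 0 by rewrite pnatr_eq0 -lt0n.
rewrite (_ : (tsum v)%:~R = - ((k + 2)%:R%:~R * (hd v)%:~R)); last first.
  by apply/eqP; rewrite -addr_eq0 addrC h.
rewrite rmorph_nat natrD /hd.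
field.
exact: kn.
Qed.

Lemma dot00 n : dot (0 : 'rV[int]_n) 0 = 0.
Proof. by rewrite dotE big1 // => c _; rewrite mxE mul0r. Qed.

Lemma iso_gen k l n (T : pred 'rV[int]_n) (f : 'rV[int]_l.+1 -> 'rV[int]_n) :
  (l <= k + 4)%N ->
  (forall u v, f (u - v) = f u - f v) ->
  (forall u v, Lf k u = 0 -> Lf k v = 0 -> dot (f u) (f v) = negform k u v) ->
  (forall v, Sp k l v -> T (f v)) ->
  (forall w, T w -> exists2 v, Sp k l v & f v = w) ->
  rs_iso (@negform k l) (@dot n) (@rootsS k l) T.
Proof.
move=> lk fB fiso fST fsurj; exists f; split; [|split; [|split]].
- by move=> v /roots_Sp; apply: fST.
- move=> u v /roots_Sp [_ Lu _] /roots_Sp [_ Lv _] E.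
  apply/eqP; rewrite -subr_eq0; apply/negPn/negP => nz.
  have Luv : Lf k (u - v) = 0 by rewrite LfD LfN Lu Lv subrr.
  have := posL _ _ _ lk Luv nz.
  by rewrite -fiso // fB E subrr dot00 ltxx.
- move=> w /fsurj [v Sv <-]; exists v => //; exact: Sp_roots.
- by move=> u v /roots_Sp [_ Lu _] /roots_Sp [_ Lv _]; apply: fiso.
Qed.

Lemma sum_shift l (u v : 'rV[int]_l.+1) x y :
  \sum_(m < l) (tl u m + x) * (tl v m + y) =
  ts u v + x * tsum v + y * tsum u + l%:R * x * y.
Proof.
transitivity (\sum_(m < l) (tl u m * tl v m + x * tl v m + y * tl u m + x * y)).
  by apply: eq_bigr => m _; ring.
rewrite !big_split /= -!mulr_sumr sumr_const card_ord -mulr_natl; ring.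
Qed.

Lemma dd_facts n (i j : 'I_n) : i != j ->
  [/\ \sum_c (delta_mx 0 i - delta_mx 0 j : 'rV[int]_n) 0 c = 0,
      \sum_c (delta_mx 0 i - delta_mx 0 j : 'rV[int]_n) 0 c *
             (delta_mx 0 i - delta_mx 0 j : 'rV[int]_n) 0 c = 2 &
      forall c, -1 <= (delta_mx 0 i - delta_mx 0 j : 'rV[int]_n) 0 c <= 1].
Proof.
move=> ij; have E c : (delta_mx 0 i - delta_mx 0 j : 'rV[int]_n) 0 c =
   (c == i)%:R - (c == j)%:R by rewrite !mxE eqxx.
split.
- rewrite (sum2 _ _ _ _ ij); first by rewrite !E eqxx (negbTE ij) eq_sym (negbTE ij) eqxx.
  by move=> m mi mj; rewrite E (negbTE mi) (negbTE mj) subrr.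
- rewrite (sum2 _ _ _ _ ij); first by rewrite !E eqxx (negbTE ij) eq_sym (negbTE ij) eqxx.
  by move=> m mi mj; rewrite E (negbTE mi) (negbTE mj) subrr mulr0.
- by move=> c; rewrite E; case: (c == i); case: (c == j).
Qed.

Definition fA n (v : 'rV[int]_n.+1) : 'rV[int]_n.+1 :=
  \row_c (if c == ord0 then - hd v else v 0 c + hd v).
Arguments fA {n}.

Lemma fA0 n (v : 'rV[int]_n.+1) : fA v 0 ord0 = - hd v.
Proof. by rewrite mxE eqxx. Qed.
Lemma fAl n (v : 'rV[int]_n.+1) m : fA v 0 (lift ord0 m) = tl v m + hd v.
Proof.
have nl : (lift ord0 m == ord0 :> 'I_n.+1) = false by rewrite eq_sym; apply/negbTE/neq_lift.
by rewrite mxE nl.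
Qed.

Lemma isoA k : rs_iso (@negform k (k+3)) (@dot _) (@rootsS k (k+3)) (@stdA (k+3)).
Proof.
have fiso (u v : 'rV[int]_(k+3).+1) : Lf k u = 0 -> Lf k v = 0 -> dot (fA u) (fA v) = negform k u v.
  rewrite /Lf dotE full_sum !fA0.
  under eq_bigr do rewrite !fAl.
  rewrite sum_shift negformE => Lu Lv.
  have -> : tsum u = - ((k + 2)%:R * hd u) by apply/eqP; rewrite -addr_eq0 addrC Lu.
  have -> : tsum v = - ((k + 2)%:R * hd v) by apply/eqP; rewrite -addr_eq0 addrC Lv.
  rewrite !natrD; ring.
have fAA (w : 'rV[int]_(k+3).+1) : fA (fA w) = w.
  apply/matrixP => i c; rewrite ord1 mxE /hd fA0 opprK.
  case: ifP => [/eqP->|c0] //; by rewrite mxE c0 addrK.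
have sumfA (v : 'rV[int]_(k+3).+1) : \sum_c fA v 0 c = Lf k v.
  rewrite full_sum fA0; under eq_bigr do rewrite fAl.
  rewrite big_split /= sumr_const card_ord /Lf -/(tsum v) -mulr_natl !natrD; ring.
have L0 (w : 'rV[int]_(k+3).+1) : \sum_c w 0 c = 0 -> Lf k (fA w) = 0.
  by move=> h; rewrite -sumfA fAA.
apply: (iso_gen _ _ _ _ fA).
- by rewrite leq_add2l.
- move=> u v; apply/matrixP => i c; rewrite ord1 !mxE /hd !mxE.
  by case: (c == ord0) => /=; ring.
- exact: fiso.
- move=> v Sv; have [Nv Lv hv] := Sv.
  have h2 : \sum_c fA v 0 c * fA v 0 c = 2 by rewrite -dotE fiso.
  have h0 : \sum_c fA v 0 c = 0 by rewrite sumfA.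
  have [i [j [ij E]]] := LemA _ _ h2 h0.
  by apply/existsP; exists i; apply/existsP; exists j; rewrite ij E eqxx.
- move=> w /existsP[i /existsP[j /andP[ij /eqP E]]].
  have [s0 s2 bnd] := dd_facts _ _ _ ij; rewrite -E in s0 s2 bnd.
  exists (fA w); last exact: fAA.
  have Lw := L0 _ s0.
  split => //.
    by rewrite -fiso // fAA dotE.
  by rewrite /hd fA0 /hd; have := bnd ord0; lia.
Qed.

Definition fD n (v : 'rV[int]_n.+1) : 'rV[int]_n := \row_j (tl v j + hd v).
Definition gD n (t0 : int) (w : 'rV[int]_n) : 'rV[int]_n.+1 :=
  \row_c (match unlift ord0 c with Some m => w 0 m - t0 | None => t0 end).
Arguments fD {n}.
Arguments gD {n}.

Lemma hd_gD n t0 (w : 'rV[int]_n) : hd (gD t0 w) = t0.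
Proof. by rewrite /hd mxE unlift_none. Qed.
Lemma tl_gD n t0 (w : 'rV[int]_n) m : tl (gD t0 w) m = w 0 m - t0.
Proof. by rewrite /tl mxE liftK. Qed.
Lemma fD_gD n t0 (w : 'rV[int]_n) : fD (gD t0 w) = w.
Proof.
apply/matrixP => i c; rewrite ord1 mxE tl_gD hd_gD; exact: subrK.
Qed.

Lemma isoD k : rs_iso (@negform k (k+4)) (@dot _) (@rootsS k (k+4)) (@stdD (k+4)).
Proof.
have fiso (u v : 'rV[int]_(k+4).+1) : Lf k u = 0 -> Lf k v = 0 -> dot (fD u) (fD v) = negform k u v.
  rewrite /Lf dotE.
  under eq_bigr do rewrite !mxE.
  rewrite sum_shift negformE => Lu Lv.
  have -> : tsum u = - ((k + 2)%:R * hd u) by apply/eqP; rewrite -addr_eq0 addrC Lu.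
  have -> : tsum v = - ((k + 2)%:R * hd v) by apply/eqP; rewrite -addr_eq0 addrC Lv.
  rewrite !natrD; ring.
apply: (iso_gen _ _ _ _ fD).
- by [].
- move=> u v; apply/matrixP => i c; rewrite ord1 !mxE /hd /tl !mxE; ring.
- exact: fiso.
- move=> v Sv; have [Nv Lv hv] := Sv.
  have h2 : \sum_c fD v 0 c * fD v 0 c = 2 by rewrite -dotE fiso.
  have [i [j [s [t [ij E]]]]] := LemB _ _ h2.
  apply/existsP; exists i; apply/existsP; exists j; apply/existsP; exists s.
  by apply/existsP; exists t; rewrite ij E eqxx.
- move=> w /existsP[i /existsP[j /existsP[s /existsP[t /andP[ij /eqP E]]]]].
  have nij : i != j by rewrite neq_ltn ij.
  have wE c : w 0 c = (-1) ^+ s * (c == i)%:R + (-1) ^+ t * (c == j)%:R.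
    by rewrite E !mxE !eqxx.
  have Sw : \sum_c w 0 c = (-1) ^+ s + (-1) ^+ t.
    rewrite (sum2 _ _ _ _ nij).
      by rewrite !wE eqxx (negbTE nij) eq_sym (negbTE nij) /= !eqxx !mulr1 !mulr0 addr0 add0r.
    by move=> m mi mj; rewrite wE (negbTE mi) (negbTE mj) !mulr0 addr0.
  have Sw2 : \sum_c w 0 c * w 0 c = 2.
    rewrite (sum2 _ _ _ _ nij).
      rewrite !wE eqxx (negbTE nij) eq_sym (negbTE nij) /= !eqxx !mulr1 !mulr0 addr0 add0r.
      by rewrite -!expr2 !sqrr_sign.
    move=> m mi mj; rewrite wE (negbTE mi) (negbTE mj) (mulr0 ((-1) ^+ s)) (mulr0 ((-1) ^+ t)) addr0; exact: mulr0.
  pose t0 : int := if s then (if t then -1 else 0) else (if t then 0 else 1).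
  have Lg : Lf k (gD t0 w) = 0.
    rewrite /Lf hd_gD /tsum.
    under eq_bigr do rewrite tl_gD.
    rewrite sumrB Sw sumr_const card_ord -mulr_natl !natrD /t0.
    by destruct s; destruct t; rewrite /= ?expr1 ?expr0; ring.
  exists (gD t0 w); last exact: fD_gD.
  split => //.
    by rewrite -fiso // fD_gD dotE.
  by rewrite hd_gD /t0; destruct s; destruct t.
Qed.

Lemma hdX l (I : {set 'I_l.+1}) : ord0 \notin I ->
  hd (ell ord0 - \sum_(i in I) ell i) = 1.
Proof. by move=> nI; rewrite /hd /ell !mxE sumdE (negbTE nI) !eqxx /= subr0. Qed.
Lemma tlX l (I : {set 'I_l.+1}) m :
  tl (ell ord0 - \sum_(i in I) ell i) m = - (lift ord0 m \in I)%:R.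
Proof.
have nl : (lift ord0 m == ord0) = false by rewrite eq_sym; apply/negbTE/neq_lift.
by rewrite /tl /ell !mxE sumdE nl eqxx /= sub0r.
Qed.

Lemma dot_row_mx n1 n2 (a c : 'rV[int]_n1) (b d : 'rV[int]_n2) :
  dot (row_mx a b) (row_mx c d) = dot a c + dot b d.
Proof.
by rewrite !dotE big_split_ord /=; congr (_ + _); apply: eq_bigr => i _;
  rewrite ?row_mxEl ?row_mxEr.
Qed.

Lemma sum_I2 (F : 'I_2 -> int) : \sum_r F r = F ord0 + F ord_max.
Proof. by rewrite !big_ord_recl big_ord0 addr0; congr (_ + F _); apply: val_inj. Qed.

Definition fX n (v : 'rV[int]_n.+1) : 'rV[int]_(n + 2) :=
  row_mx (\row_j (tl v j + hd v)) (\row_(r < 2) (if r == ord0 then hd v else - hd v)).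
Arguments fX {n}.

Lemma isoAxA k :
  rs_iso (@negform k (k+1).+1) (@dot _) (@rootsS k (k+1).+1) (@stdAxA (k+1) 1).
Proof.
have eN : (((k+1).+1)%:R : int) = k%:R + 2 by rewrite -addn1 !natrD -addrA.
have fiso (u v : 'rV[int]_(k+1).+2) : Lf k u = 0 -> Lf k v = 0 ->
    dot (fX u) (fX v) = negform k u v.
  rewrite /Lf dot_row_mx !dotE sum_I2.
  under eq_bigr do rewrite !mxE.
  rewrite sum_shift negformE !mxE /= => Lu Lv.
  have -> : tsum u = - ((k + 2)%:R * hd u) by apply/eqP; rewrite -addr_eq0 addrC Lu.
  have -> : tsum v = - ((k + 2)%:R * hd v) by apply/eqP; rewrite -addr_eq0 addrC Lv.
  rewrite eN !natrD; ring.
apply: (iso_gen _ _ _ _ fX).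
- rewrite -addn1 -!addnA leq_add2l; by [].
- move=> u v; rewrite /fX opp_row_mx add_row_mx; congr (row_mx _ _);
    apply/matrixP => i c; rewrite ord1 !mxE /hd /tl !mxE.
    ring.
  by case: (c == ord0) => /=; ring.
- exact: fiso.
- move=> v Sv; have [Nv Lv hv] := Sv.
  set a : 'rV[int]_(k+1).+1 := \row_j (tl v j + hd v).
  set b : 'rV[int]_2 := \row_(r < 2) (if r == ord0 then hd v else - hd v).
  have fXE : fX v = row_mx a b by [].
  have Hd : dot a a + dot b b = 2 by rewrite -dot_row_mx -fXE fiso.
  have db : dot b b = 2 * (hd v * hd v) by rewrite dotE sum_I2 !mxE /=; ring.
  have sa : \sum_j a 0 j = Lf k v.
    under eq_bigr do rewrite mxE.
    rewrite big_split /= sumr_const card_ord /Lf -/(tsum v) -[hd v *+ _]mulr_natl eN natrD; ring.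
  have : hd v = -1 \/ hd v = 0 \/ hd v = 1 by lia.
  case => [hm|[h0|h1]].
  + have da : \sum_c a 0 c * a 0 c = 0 by rewrite -dotE; move: Hd; rewrite db hm; lia.
    have a0 : a = 0.
      apply/matrixP => i j; rewrite ord1 [X in _ = X]mxE.
      have sq0 c : 0 <= a 0 c * a 0 c by rewrite -expr2 sqr_ge0.
      have := sq_le_sum _ _ j sq0; rewrite da => hh; nia.
    apply/orP; right; apply/existsP; exists ord_max; apply/existsP; exists ord0; rewrite /=.
    rewrite fXE a0 !delta_mx_rshift opp_row_mx add_row_mx oppr0 addr0.
    apply/eqP; congr row_mx.
    apply/matrixP => i r; rewrite ord1 /b !mxE hm.
    by case: r => [[|[|//]] Hr].
  + have b0 : b = 0 by apply/matrixP => i r; rewrite !mxE h0 oppr0; case: (r == ord0).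
    have da : \sum_c a 0 c * a 0 c = 2 by rewrite -dotE; move: Hd; rewrite db h0; lia.
    have [i [j [ij Ea]]] := LemA _ a da (etrans sa Lv).
    apply/orP; left; apply/existsP; exists i; apply/existsP; exists j; rewrite ij /=.
    by rewrite fXE b0 Ea !delta_mx_lshift opp_row_mx add_row_mx oppr0 addr0 eqxx.
  + have da : \sum_c a 0 c * a 0 c = 0 by rewrite -dotE; move: Hd; rewrite db h1; lia.
    have a0 : a = 0.
      apply/matrixP => i j; rewrite ord1 [X in _ = X]mxE.
      have sq0 c : 0 <= a 0 c * a 0 c by rewrite -expr2 sqr_ge0.
      have := sq_le_sum _ _ j sq0; rewrite da => hh; nia.
    apply/orP; right; apply/existsP; exists ord0; apply/existsP; exists ord_max; rewrite /=.
    rewrite fXE a0 !delta_mx_rshift opp_row_mx add_row_mx oppr0 addr0.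
    apply/eqP; congr row_mx.
    apply/matrixP => i r; rewrite ord1 /b !mxE h1.
    by case: r => [[|[|//]] Hr].
- move=> w; case/orP => [/existsP[i /existsP[j /andP[ij /eqP E]]] |
                        /existsP[i /existsP[j /andP[ij /eqP E]]]].
  + exists (ell (lift ord0 i) - ell (lift ord0 j)); first exact: Sp_diff.
    rewrite E !delta_mx_lshift opp_row_mx add_row_mx oppr0 addr0 /fX; congr row_mx.
      apply/matrixP => r m; rewrite ord1 [LHS]mxE tlD tlN !tl_ell hdD hdN !hd_ell subrr addr0.
      by rewrite !mxE !eqxx.
    apply/matrixP => r c; rewrite ord1 !mxE hdD hdN !hd_ell subrr oppr0.
    by case: (_ == _).
  + pose I0 := [set~ (ord0 : 'I_(k+1).+2)].
    have nI : ord0 \notin I0 by rewrite !inE eqxx.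
    have cI : #|I0| = (k+2)%N by rewrite cardsC1 card_ord; lia.
    have SX := Sp_X k _ I0 nI cI.
    set X := ell ord0 - \sum_(c in I0) ell c.
    have fXX : fX X = row_mx 0 (\row_(r < 2) (if r == ord0 then 1 else -1)).
      rewrite /fX hdX //; congr row_mx; apply/matrixP => r m; rewrite ord1 !mxE tlX.
        have nl : (lift ord0 m == ord0) = false by rewrite eq_sym; apply/negbTE/neq_lift.
        by rewrite !inE nl /= addNr.
    have fXN (v : 'rV[int]_(k+1).+2) : fX (- v) = - fX v.
      rewrite /fX opp_row_mx; congr row_mx; apply/matrixP => r m; rewrite ord1 !mxE ?tlN hdN.
        by rewrite opprD.
      by case: (_ == _); rewrite ?opprK.
    exists (if i == ord0 then X else - X).
      by case: (i == ord0); [exact: SX | exact: Sp_opp].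
    rewrite E !delta_mx_rshift opp_row_mx add_row_mx oppr0 addr0.
    clear E; move: ij; case: i => [[|[|//]] Hi]; case: j => [[|[|//]] Hj] //= _.
      rewrite fXX; congr row_mx; apply/matrixP => r c; rewrite ord1 !mxE.
      by case: c => [[|[|//]] Hc].
    rewrite fXN fXX opp_row_mx oppr0; congr row_mx; apply/matrixP => r c; rewrite ord1 !mxE.
    by case: c => [[|[|//]] Hc].
Qed.

Theorem proposition5p5 (k l : nat) :
  (0 < k)%N ->
  (l = k + 2 \/ l = k + 3 \/ l = k + 4)%N ->
  (forall v, @rootsS k l v -> @inR k l v)
  /\ is_root_system (@negform k l) (@rootsS k l)
  /\ (l = k + 2 -> rs_iso (@negform k l) (@dot _) (@rootsS k l) (@stdAxA (k + 1) 1))%N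
  /\ (l = k + 3 -> rs_iso (@negform k l) (@dot _) (@rootsS k l) (@stdA (k + 3)))%N
  /\ (l = k + 4 -> rs_iso (@negform k l) (@dot _) (@rootsS k l) (@stdD (k + 4)))%N.
Proof.
move=> k0 hl.
have lk : (l <= k + 4)%N by case: hl => [->|[->|->]]; rewrite leq_add2l.
split; first by move=> v; exact: roots_inR.
split; first exact: root_system.
split.
  move=> e; have e' : l = (k+1).+1 by rewrite e addnS.
  clear e hl lk; subst l; exact: isoAxA.
by split; move=> ->; [exact: isoA | exact: isoD].
Qed.
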